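(* Let $k\ge2$ and let $H$ be a $k$-uniform hypergraph of maximum degree $\Delta$ with a given perfect matching $M$. Then $Z_{\mathrm{pm}}(H,M,z)\neq0$ for all $z\in\mathbb C$ with $|z|\le\big((\Delta-1+k)e\big)^{-1}$.
   Context: A perfect matching of $H$ is a set of pairwise disjoint hyperedges covering all vertices. $Z_{\mathrm{pm}}(H,M,z)=\sum_{M'}z^{|M\triangle M'|}$, the sum over all perfect matchings $M'$ of $H$. The degree of a vertex is the number of hyperedges containing it. *)

(* Defs.v *)
From Stdlib Require Import Reals.
From mathcomp Require Import all_boot.

Set Implicit Arguments.
Unset Strict Implicit.
Unset Printing Implicit Defensive.

Definition Cplx : Type := prod R R.
Definition C0 : Cplx := pair R0 R0.
Definition C1 : Cplx := pair R1 R0.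
Definition Cadd (a b : Cplx) : Cplx := pair (Rplus a.1 b.1) (Rplus a.2 b.2).
Definition Cmul (a b : Cplx) : Cplx :=
  pair (Rminus (Rmult a.1 b.1) (Rmult a.2 b.2))
       (Rplus (Rmult a.1 b.2) (Rmult a.2 b.1)).
Fixpoint Cpow (a : Cplx) (n : nat) : Cplx :=
  match n with O => C1 | S m => Cmul a (Cpow a m) end.
Definition Cnorm (a : Cplx) : R := sqrt (Rplus (Rmult a.1 a.1) (Rmult a.2 a.2)).

Definition uniform (V : finType) (k : nat) (E : {set {set V}}) : bool :=
  [forall e in E, #|e| == k].

Definition degree (V : finType) (E : {set {set V}}) (v : V) : nat :=
  #|[set e in E | v \in e]|.

Definition max_degree (V : finType) (E : {set {set V}}) : nat :=
  \max_(v : V) degree E v.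

Definition perfect_matching (V : finType) (E M : {set {set V}}) : bool :=
  [&& M \subset E,
      [forall e1 in M, forall e2 in M, (e1 != e2) ==> [disjoint e1 & e2]]
    & [forall v : V, exists e in M, v \in e]].

Definition symdiff (T : finType) (A B : {set T}) : {set T} :=
  (A :\: B) :|: (B :\: A).

Definition Zpm (V : finType) (E M : {set {set V}}) (z : Cplx) : Cplx :=
  foldr Cadd C0
    [seq Cpow z #|symdiff M M'| | M' <- enum [set M' | perfect_matching E M']].

(* Main.v *)
From HB Require Import structures.
Require Import Defs.
From Stdlib Require Import Reals Lra.
From mathcomp Require Import all_boot.
From Coquelicot Require Complex.
From mathcomp Require Import zify.

Set Implicit Arguments.
Unset Strict Implicit.
Unset Printing Implicit Defensive.
Local Open Scope R_scope.

Lemma Cadd_assoc : associative Cadd.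
Proof. move=> a b c; rewrite /Cadd /=; f_equal; ring. Qed.
Lemma Cadd_comm : commutative Cadd.
Proof. move=> a b; rewrite /Cadd /=; f_equal; ring. Qed.
Lemma Cadd0 : left_id C0 Cadd.
Proof. by case=> a b; rewrite /Cadd /= !Rplus_0_l. Qed.
HB.instance Definition _ := Monoid.isComLaw.Build Cplx C0 Cadd Cadd_assoc Cadd_comm Cadd0.

Lemma Rplus_assoc' : associative Rplus.
Proof. move=> a b c; ring. Qed.
HB.instance Definition _ := Monoid.isComLaw.Build R R0 Rplus Rplus_assoc' Rplus_comm Rplus_0_l.

Lemma CnormE (a : Cplx) : Cnorm a = Complex.Cmod a.
Proof. by rewrite /Cnorm /Complex.Cmod /= !Rmult_1_r. Qed.

Lemma Cnorm_ge0 a : (0 <= Cnorm a).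
Proof. rewrite CnormE; exact: Complex.Cmod_ge_0. Qed.

Lemma Cnorm_add a b : (Cnorm (Cadd a b) <= Cnorm a + Cnorm b).
Proof. rewrite !CnormE; exact: Complex.Cmod_triangle. Qed.

Lemma Cnorm_mul a b : Cnorm (Cmul a b) = (Cnorm a * Cnorm b).
Proof. rewrite !CnormE; exact: Complex.Cmod_mult. Qed.

Lemma Cnorm0 : Cnorm C0 = R0.
Proof. rewrite CnormE; exact: Complex.Cmod_0. Qed.

Lemma Cnorm1 : Cnorm Defs.C1 = 1.
Proof. rewrite CnormE; exact: Complex.Cmod_1. Qed.

Definition Copp (a : Cplx) : Cplx := ((- a.1), (- a.2)).

Lemma Cnorm_opp a : Cnorm (Copp a) = Cnorm a.
Proof. rewrite !CnormE; exact: Complex.Cmod_opp. Qed.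

Lemma Cnorm_sub a b : Cnorm a - Cnorm b <= Cnorm (Cadd a b).
Proof.
have h : Cadd (Cadd a b) (Copp b) = a.
  by case: a b => a1 a2 [b1 b2]; rewrite /Cadd /Copp /=; f_equal; ring.
move: (Cnorm_add (Cadd a b) (Copp b)); rewrite h Cnorm_opp; lra.
Qed.

Lemma Cnorm_eq0 a : Cnorm a = R0 -> a = C0.
Proof. rewrite CnormE => /Complex.Cmod_eq_0 ->. by []. Qed.

Lemma Cnorm_sum (I : finType) (P : pred I) (F : I -> Cplx) :
  (Cnorm (\big[Cadd/C0]_(i | P i) F i) <= \big[Rplus/R0]_(i | P i) Cnorm (F i)).
Proof.
apply: (big_ind2 (fun a b => Cnorm a <= b)).
- by rewrite Cnorm0; lra.
- move=> a1 b1 a2 b2 h1 h2; move: (Cnorm_add a1 a2); lra.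
- by move=> i _; lra.
Qed.

Lemma Rsum_le (I : finType) (P : pred I) (F G : I -> R) :
  (forall i, P i -> F i <= G i) ->
  (\big[Rplus/R0]_(i | P i) F i <= \big[Rplus/R0]_(i | P i) G i).
Proof.
move=> h; apply: (big_ind2 (fun a b => a <= b)) => //.
- lra.
- move=> *; lra.
Qed.

Lemma Rsum_const (I : finType) (P : pred I) (c : R) :
  \big[Rplus/R0]_(i | P i) c = (INR #|P| * c).
Proof.
rewrite big_const; elim: #|P| => [|n IH]; first by rewrite /= Rmult_0_l.
rewrite iterS IH S_INR; ring.
Qed.

Lemma Cmul_sum (I : finType) (P : pred I) (F : I -> Cplx) a :
  Cmul a (\big[Cadd/C0]_(i | P i) F i) = \big[Cadd/C0]_(i | P i) Cmul a (F i).
Proof.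
apply: (big_morph (Cmul a)).
- by move=> u w; case: a u w => a1 a2 [u1 u2] [w1 w2]; rewrite /Cmul /Cadd /=; f_equal; ring.
- by case: a => a1 a2; rewrite /Cmul /C0 /=; f_equal; ring.
Qed.

Lemma Cpow_add a n m : Cpow a (n + m)%N = Cmul (Cpow a n) (Cpow a m).
Proof.
elim: n => [|n IH] /=.
  by case: (Cpow a m) => u w; rewrite /Cmul /Defs.C1 /=; f_equal; ring.
rewrite IH; change (Cmul a (Cmul (Cpow a n) (Cpow a m)) = Cmul (Cmul a (Cpow a n)) (Cpow a m)).
exact: Complex.Cmult_assoc.
Qed.

Lemma Cpow_double a n : Cpow a (n + n)%N = Cpow (Cmul a a) n.
Proof.
elim: n => [|n IH] //.
rewrite addSn addnS /= IH.
set P := Cpow (Cmul a a) n.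
change (Complex.Cmult a (Complex.Cmult a P) = Complex.Cmult (Complex.Cmult a a) P).
by rewrite Complex.Cmult_assoc.
Qed.

Lemma Cnorm_pow a n : Cnorm (Cpow a n) = (Cnorm a ^ n).
Proof. elim: n => [|n IH] /=; first exact: Cnorm1. by rewrite Cnorm_mul IH. Qed.

Lemma disjP (T : finType) (A B : {set T}) :
  reflect (forall u, u \in A -> u \in B -> False) [disjoint A & B].
Proof.
apply: (iffP pred0P) => [h u ua ub | h u].
  by move: (h u); rewrite /= ua ub.
rewrite /=; apply/negP => /andP [ua ub]; exact: h u ua ub.
Qed.

Lemma coverP (T : finType) (P : {set {set T}}) u :
  reflect (exists2 g, g \in P & u \in g) (u \in cover P).
Proof. exact: bigcupP. Qed.

Lemma nL1 k m : (0 < k)%N -> (k <= m)%N -> (m - k < m)%N.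
Proof. lia. Qed.
Lemma nL2 j a : (0 < j)%N -> (j <= a)%N -> (j.-1 + (a - j) = a - 1)%N.
Proof. lia. Qed.
Lemma nL3 q j c : (0 < q + j)%N -> (j <= c)%N -> ((q + j).-1 + (c - j) = (q + c) - 1)%N.
Proof. lia. Qed.
Lemma nL4 a k w : (a + k <= w)%N -> (a <= w - k)%N.
Proof. lia. Qed.
Lemma nL5 k q c : (0 < k)%N -> (k * q + k * c <= k * c)%N -> q = 0%N.
Proof. move=> hk h; have : (k * q = 0)%N by lia. move/eqP; rewrite muln_eq0 => /orP [/eqP k0 | /eqP //]; lia. Qed.

Section Comb.
Variable V : finType.
Variable k : nat.
Variables E M : {set {set V}}.
Hypothesis k_gt0 : (0 < k)%N.
Hypothesis unifE : forall e, e \in E -> #|e| = k.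
Hypothesis ME : M \subset E.
Hypothesis Mdisj : forall e1 e2, e1 \in M -> e2 \in M -> e1 != e2 -> [disjoint e1 & e2].
Hypothesis Mcov : forall v, exists2 e, e \in M & v \in e.

Definition pdisj (P : {set {set V}}) :=
  [forall f1 in P, forall f2 in P, (f1 != f2) ==> [disjoint f1 & f2]].

Lemma pdisjP (P : {set {set V}}) : reflect
  (forall f1 f2, f1 \in P -> f2 \in P -> f1 != f2 -> [disjoint f1 & f2]) (pdisj P).
Proof.
apply: (iffP idP) => [/forall_inP h f1 f2 h1 h2 ne | h].
  exact: (implyP (forall_inP (h f1 h1) f2 h2) ne).
apply/forall_inP=> f1 h1; apply/forall_inP => f2 h2; apply/implyP; exact: h.
Qed.

Lemma pdisj_uniq (P : {set {set V}}) (f1 f2 : {set V}) (v : V) : pdisj P -> f1 \in P -> f2 \in P -> v \in f1 -> v \in f2 -> f1 = f2.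
Proof.
move=> /pdisjP h h1 h2 v1 v2; case: (eqVneq f1 f2) => // ne.
by move: (h _ _ h1 h2 ne) => /disjP d; case: (d v).
Qed.

Lemma M_uniq (e1 e2 : {set V}) (v : V) : e1 \in M -> e2 \in M -> v \in e1 -> v \in e2 -> e1 = e2.
Proof.
move=> h1 h2 v1 v2; case: (eqVneq e1 e2) => // ne.
by move: (Mdisj h1 h2 ne) => /disjP d; case: (d v).
Qed.

Lemma E_nonempty (e : {set V}) : e \in E -> exists u, u \in e.
Proof. by move=> /unifE he; apply/card_gt0P; rewrite he. Qed.

Definition adm (W : {set V}) (P : {set {set V}}) : bool :=
  [&& P \subset E :\: M, [forall f in P, f \subset W], pdisj P &
      [forall e in M, (~~ [disjoint e & W :\: cover P]) ==> (e \subset W :\: cover P)]].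

Lemma admP (W : {set V}) (P : {set {set V}}) : reflect
  [/\ P \subset E :\: M, forall f, f \in P -> f \subset W, pdisj P &
      forall e, e \in M -> ~~ [disjoint e & W :\: cover P] -> e \subset W :\: cover P]
  (adm W P).
Proof.
apply: (iffP and4P) => [[a /forall_inP b c /forall_inP d] | [a b c d]]; split=> //.
- by move=> e he; exact: (implyP (d e he)).
- by apply/forall_inP.
- by apply/forall_inP => e he; apply/implyP; exact: d.
Qed.

Variable x : Cplx.

Definition Q (W : {set V}) := \big[Cadd/C0]_(P | adm W P) Cpow x #|P|.

Definition TT (W : {set V}) (v : V) := [set f in E :\: M | (v \in f) && (f \subset W)].

Lemma partA (W : {set V}) (v : V) (e0 : {set V}) (P : {set {set V}}) : v \in W -> e0 \in M -> v \in e0 ->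
  (adm W P && (v \notin cover P)) = (e0 \subset W) && adm (W :\: e0) P.
Proof.
move=> vW e0M ve0; apply/idP/idP.
- case/andP => /admP [h1 h2 h3 h4] hv.
  have he0 : e0 \subset W :\: cover P.
    apply: h4 => //; apply/negP => /disjP d; apply: (d v ve0).
    by rewrite inE hv vW.
  have e0W : e0 \subset W by apply: subset_trans he0 (subsetDl _ _).
  rewrite e0W /=; apply/admP; split => //.
  + move=> f hf; apply/subsetP => u uf; rewrite inE (subsetP (h2 f hf) u uf) andbT.
    apply/negP => ue0; move: (subsetP he0 u ue0); rewrite inE => /andP [/negP nc _].
    by apply: nc; apply/coverP; exists f.
  + move=> e he hne.
    have hne' : ~~ [disjoint e & W :\: cover P].
      apply: contra hne; apply: disjointWr; apply/subsetP => u; rewrite !inE.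
      by case/andP => -> /andP [_ ->].
    have := h4 e he hne' => eW.
    have ne : e != e0.
      apply/negP => /eqP ee; move/negP: hne; apply; apply/disjP => u; rewrite ee !inE => ue /and3P [_ /negP h _]; exact: h ue.
    move: (Mdisj he e0M ne) => /disjP d.
    apply/subsetP => u ue; move: (subsetP eW u ue); rewrite !inE => /andP [-> ->].
    by rewrite andbT; apply/negP => ue0; exact: d u ue ue0.
- case/andP => e0W /admP [h1 h2 h3 h4].
  have ncov : forall u, u \in e0 -> u \notin cover P.
    move=> u ue0; apply/negP => /coverP [g gP ug].
    by move: (subsetP (h2 g gP) u ug); rewrite inE ue0.
  rewrite ncov // andbT; apply/admP; split => //.
  + move=> f hf; apply: subset_trans (h2 f hf) (subsetDl _ _).
  + move=> e he hne; case: (eqVneq e e0) => [-> | ne].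
      apply/subsetP => u ue0; rewrite inE (ncov u ue0) /=; exact: (subsetP e0W).
    move: (Mdisj he e0M ne) => /disjP d.
    have hne' : ~~ [disjoint e & (W :\: e0) :\: cover P].
      apply: contra hne => /disjP dd; apply/disjP => u ue; rewrite inE => /andP [nc uW].
      apply: (dd u ue); rewrite !inE nc uW andbT /=; apply/negP; exact: d u ue.
    move: (h4 e he hne') => sub; apply/subsetP => u ue; move: (subsetP sub u ue).
    by rewrite !inE => /andP [-> /andP [_ ->]].
Qed.

Lemma cover_setU1 (f : {set V}) (P : {set {set V}}) : cover (f |: P) = f :|: cover P.
Proof.
apply/setP => u; rewrite in_setU; apply/idP/idP.
- case/coverP => g; rewrite in_setU1 => /orP [/eqP -> | gP] ug; first by rewrite ug.
  by apply/orP; right; apply/coverP; exists g.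
- case/orP => [uf | /coverP [g gP ug]].
    by apply/coverP; exists f; rewrite ?in_setU1 ?eqxx.
  by apply/coverP; exists g; rewrite ?in_setU1 ?gP ?orbT.
Qed.

Lemma partB (W : {set V}) (v : V) (f : {set V}) (P' : {set {set V}}) : f \in TT W v ->
  (adm W (f |: P') && (f \notin P')) = adm (W :\: f) P'.
Proof.
rewrite inE => /andP [fEM /andP [vf fW]].
have eq1 : W :\: cover (f |: P') = (W :\: f) :\: cover P'.
  apply/setP => u; rewrite cover_setU1 !inE negb_or.
  by case: (u \in f); case: (u \in cover P'); case: (u \in W).
apply/idP/idP.
- case/andP => /admP [h1 h2 h3 h4] fP'; apply/admP; split.
  + apply: subset_trans h1; exact: subsetUr.
  + move=> g gP; have gP2 : g \in f |: P' by rewrite in_setU1 gP orbT.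
    have ne : g != f by apply/negP => /eqP ee; rewrite -ee gP in fP'.
    move/pdisjP: h3 => h3; move: (h3 _ _ gP2 (setU11 f P') ne) => /disjP d.
    apply/subsetP => u ug; rewrite inE (subsetP (h2 g gP2) u ug) andbT.
    by apply/negP => uf; exact: d u ug uf.
  + apply/pdisjP => f1 f2 a1 a2; apply: (pdisjP _ h3); by rewrite in_setU1 ?a1 ?a2 orbT.
  + by move=> e he; rewrite -eq1; exact: h4.
- move=> /admP [h1 h2 h3 h4].
  have fP' : f \notin P'.
    apply/negP => fP; case: (E_nonempty (subsetP (subsetDl E M) f fEM)) => u uf.
    by move: (subsetP (h2 f fP) u uf); rewrite inE uf.
  rewrite fP' andbT; apply/admP; split.
  + apply/subsetP => g; rewrite in_setU1 => /orP [/eqP -> // | gP]; exact: (subsetP h1).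
  + move=> g; rewrite in_setU1 => /orP [/eqP -> // | gP].
    apply: subset_trans (h2 g gP) (subsetDl _ _).
  + apply/pdisjP => f1 f2; rewrite !in_setU1.
    have key : forall g, g \in P' -> [disjoint f & g].
      move=> g gP; apply/disjP => u uf ug; move: (subsetP (h2 g gP) u ug).
      by rewrite inE uf.
    case/orP => [/eqP -> | a1]; case/orP => [/eqP -> | a2] //; first by rewrite eqxx.
    * by move=> _; exact: key.
    * by move=> _; rewrite disjoint_sym; exact: key.
    * exact: (pdisjP _ h3).
  + by move=> e he; rewrite eq1; exact: h4.
Qed.

Lemma Q_rec (W : {set V}) (v : V) (e0 : {set V}) : v \in W -> e0 \in M -> v \in e0 ->
  Q W = Cadd (Cmul x (\big[Cadd/C0]_(f in TT W v) Q (W :\: f)))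
             (if e0 \subset W then Q (W :\: e0) else C0).
Proof.
move=> vW e0M ve0.
rewrite /Q (bigID (fun P => v \in cover P)) /=.
congr Cadd; last first.
  rewrite (eq_bigl (fun P => (e0 \subset W) && adm (W :\: e0) P)); last first.
    by move=> P; rewrite (partA _ vW e0M ve0).
  by case: (e0 \subset W) => //; rewrite big_pred0_eq.
rewrite Cmul_sum.
transitivity (\big[Cadd/C0]_(P | adm W P) \big[Cadd/C0]_(f in TT W v | f \in P) Cpow x #|P|).
  rewrite big_mkcondr; apply: eq_bigr => P /admP [h1 h2 h3 h4].
  case: ifP => hv.
    case/coverP: hv => g gP vg.
    rewrite (eq_bigl (fun f => f == g)) ?big_pred1_eq // => f.
    apply/andP/eqP => [[fT fP] | ->].
      by move: fT; rewrite inE => /andP [_ /andP [vf _]]; exact: (pdisj_uniq h3 fP gP vf vg).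
    by rewrite inE gP (subsetP h1 g gP) vg (h2 g gP).
  rewrite big_pred0 // => f; apply/negP => /andP [fT fP].
  move: fT; rewrite inE => /andP [_ /andP [vf _]].
  by move/negP: hv; apply; apply/coverP; exists f.
under eq_bigr do rewrite big_mkcondr.
rewrite exchange_big; apply: eq_bigr => f fT.
rewrite -big_mkcondr /=.
rewrite (reindex_onto (fun P' => f |: P') (fun P => P :\ f)) /=; last first.
  by move=> P /andP [_ fP]; rewrite setD1K.
rewrite Cmul_sum; apply: eq_big => P'.
  have -> : (f |: P') :\ f == P' = (f \notin P').
    apply/eqP/idP => [<- | h]; first by rewrite !inE eqxx.
    apply/setP => g; rewrite !inE; case: eqP => // ->; by rewrite (negPf h).
  by rewrite setU11 andbT (partB P' fT).
move=> hP'; rewrite cardsU1.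
case/andP: hP' => _ /eqP h.
have -> : f \notin P' by rewrite -h !inE eqxx.
by [].
Qed.


Lemma cover_card (P : {set {set V}}) : pdisj P -> P \subset E -> #|cover P| = (k * #|P|)%N.
Proof.
move=> hd hE.
have tr : trivIset P.
  apply/trivIsetP => A B hA hB ne; exact: (pdisjP _ hd).
move/eqP: tr => <-.
rewrite (eq_bigr (fun _ => k)); last by move=> A hA; apply: unifE; exact: (subsetP hE).
by rewrite sum_nat_const mulnC.
Qed.

Lemma M_pdisj (A : {set {set V}}) : A \subset M -> pdisj A.
Proof. move=> hA; apply/pdisjP => f1 f2 h1 h2; apply: Mdisj; exact: (subsetP hA). Qed.

Lemma coverM_card (A : {set {set V}}) : A \subset M -> #|cover A| = (k * #|A|)%N.
Proof. move=> hA; apply: cover_card; [exact: M_pdisj | exact: subset_trans hA ME]. Qed.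

Definition coreE (W : {set V}) := [set e in M | e \subset W].

Lemma coreE_sub (W : {set V}) : coreE W \subset M.
Proof. by apply/subsetP => e; rewrite inE => /andP []. Qed.

Lemma core_sub (W : {set V}) : cover (coreE W) \subset W.
Proof.
apply/subsetP => u /coverP [e]; rewrite inE => /andP [_ eW] ue; exact: (subsetP eW).
Qed.

Lemma cover_mono (A B : {set {set V}}) : A \subset B -> cover A \subset cover B.
Proof.
move=> hAB; apply/subsetP => u /coverP [e eA ue]; apply/coverP; exists e => //.
exact: (subsetP hAB).
Qed.

Lemma coreE_cover (A : {set {set V}}) : A \subset M -> coreE (cover A) = A.
Proof.
move=> hA; apply/setP => e; rewrite inE; apply/andP/idP => [[eM eW] | eA].
  have [u ue] := E_nonempty (subsetP ME e eM).
  case/coverP: (subsetP eW u ue) => g gA ug.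
  by rewrite (M_uniq eM (subsetP hA g gA) ue ug).
split; first exact: (subsetP hA).
apply/subsetP => u ue; apply/coverP; by exists e.
Qed.

Lemma cover_D1 (A : {set {set V}}) e : A \subset M -> e \in A -> cover (A :\ e) = cover A :\: e.
Proof.
move=> hA eA; apply/setP => u; rewrite inE; apply/coverP/andP.
- case=> g; rewrite !inE => /andP [ne gA] ug; split; last by apply/coverP; exists g.
  apply/negP => ue; apply: (negP ne); apply/eqP. exact: (M_uniq (subsetP hA g gA) (subsetP hA e eA) ug ue).
- case=> nue /coverP [g gA ug]; exists g => //; rewrite !inE gA andbT.
  by apply/negP => /eqP ge; rewrite -ge ug in nue.
Qed.

Definition JJ (W f : {set V}) := [set e in coreE W | ~~ [disjoint e & f]].

Lemma JJ_sub (W f : {set V}) : JJ W f \subset coreE W.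
Proof. by apply/subsetP => e; rewrite inE => /andP []. Qed.

Lemma coreE_Df (W f : {set V}) : coreE (W :\: f) = coreE W :\: JJ W f.
Proof.
apply/setP => e; rewrite /JJ /coreE !inE subsetD.
set a := (e \in M); set b := (e \subset W); set c := [disjoint e & f].
by case: a; case: b; case: c => /=.
Qed.

Lemma card_Df (W f : {set V}) : f \in E -> f \subset W -> #|W :\: f| = (#|W| - k)%N.
Proof. by move=> fE fW; rewrite cardsDS // (unifE fE). Qed.

Lemma cover0 : cover (set0 : {set {set V}}) = set0.
Proof. by apply/setP => u; rewrite inE; apply/coverP => [[g]]; rewrite inE. Qed.

Lemma Q0 : Q set0 = Defs.C1.
Proof.
rewrite /Q (eq_bigl (fun P => P == set0)) ?big_pred1_eq ?cards0 //.
move=> P; apply/idP/eqP => [/admP [h1 h2 _ _] | ->].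
  apply/setP => f; rewrite inE; apply/negP => fP.
  have [u uf] := E_nonempty (subsetP (subsetDl E M) f (subsetP h1 f fP)).
  by move: (subsetP (h2 f fP) u uf); rewrite inE.
apply/admP; split.
- exact: sub0set.
- by move=> f; rewrite inE.
- by apply/pdisjP => f1 f2; rewrite inE.
- move=> e _ /negP h; exfalso; apply: h; apply/disjP => u _; by rewrite in_setD in_set0 andbF.
Qed.

Lemma C1_neq0 : Defs.C1 <> C0.
Proof. by case; apply: R1_neq_R0. Qed.

Lemma TT_card (W : {set V}) (v : V) : (#|TT W v| <= #|[set f in E :\: M | v \in f]|)%N.
Proof.
apply: subset_leq_card; apply/subsetP => f; rewrite !inE => /andP [-> /andP [-> _]].
by [].
Qed.


Variable d : nat.
Hypothesis Hdeg : forall v, (#|[set f in E :\: M | v \in f]| <= d)%N.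
Hypothesis Hx : 2 * Cnorm x * INR d <= 1.

Definition Claim (W : {set V}) : Prop :=
  (forall A : {set {set V}}, A \subset M -> cover A = W ->
     Q W <> C0 /\ forall e, e \in A -> Cnorm (Q (cover (A :\ e))) <= 2 * Cnorm (Q W)) /\
  (forall q, (k * (q + #|coreE W|) <= #|W|)%N ->
     Cnorm (Q W) <= (/2)^q * Cnorm (Q (cover (coreE W)))).

Lemma sum_bound (W : {set V}) v (F : {set V} -> R) B :
  (forall f, f \in TT W v -> F f <= B) -> 0 <= B ->
  \big[Rplus/R0]_(f in TT W v) F f <= INR d * B.
Proof.
move=> hF hB; apply: Rle_trans (Rsum_le hF) _; rewrite Rsum_const.
apply: Rmult_le_compat_r => //; apply: le_INR; apply/leP.
exact: leq_trans (TT_card W v) (Hdeg v).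
Qed.

Lemma half_pow n : (/2)^n * 2^n = 1.
Proof.
elim: n => [|n IH] /=; first ring.
transitivity ((/2 * 2) * ((/2)^n * 2^n)); first ring.
rewrite IH; field.
Qed.

Lemma pow_aux q j : (/2)^((q + j).-1) * 2^j <= 2 * (/2)^q.
Proof.
case: (posnP (q + j)) => [h | h].
  have q0 : q = 0%N by lia.
  have j0 : j = 0%N by lia.
  rewrite q0 j0 /=; lra.
have e : (q + j)%N = ((q + j).-1).+1 by rewrite prednK.
have : (/2)^(q + j) * 2^j = (/2)^q.
  rewrite pow_add Rmult_assoc half_pow; ring.
rewrite e /= => h2.
have : (/2)^((q + j).-1) * 2^j = 2 * ((/2 * (/2)^((q + j).-1)) * 2^j) by field.
lra.
Qed.

Lemma multi n (IH : forall W' : {set V}, (#|W'| < n)%N -> Claim W') :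
  forall m (B J : {set {set V}}), #|J| = m -> B \subset M -> J \subset B -> (#|cover B| < n)%N ->
  Cnorm (Q (cover (B :\: J))) <= 2^m * Cnorm (Q (cover B)).
Proof.
elim=> [|m IHm] B J hJ hB hJB hn.
  by rewrite (cards0_eq hJ) setD0 /=; lra.
have [e eJ] : exists e, e \in J by apply/card_gt0P; rewrite hJ.
have eB := subsetP hJB e eJ.
have hJ' : #|J :\ e| = m by move: hJ; rewrite (cardsD1 e) eJ add1n => -[].
have hB' : B :\ e \subset M := subset_trans (subsetDl _ _) hB.
have hJB' : J :\ e \subset B :\ e.
  by apply/subsetP => g; rewrite !inE => /andP [-> /(subsetP hJB) ->].
have hn' : (#|cover (B :\ e)| < n)%N.
  by apply: leq_ltn_trans _ hn; apply: subset_leq_card; apply: cover_mono; exact: subsetDl.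
have eq1 : B :\: J = (B :\ e) :\: (J :\ e).
  apply/setP => g; rewrite !inE.
  by case: (eqVneq g e) => [-> | ne]; rewrite ?eJ ?eqxx ?ne.
rewrite eq1; apply: Rle_trans (IHm _ _ hJ' hB' hJB' hn') _.
have h := (((IH _ hn).1 B hB erefl).2 e eB).
have hp := pow_le 2 m ltac:(lra).
rewrite /= (Rmult_comm 2 (2^m)) Rmult_assoc; exact: Rmult_le_compat_l hp h.
Qed.

Lemma Cadd0r a : Cadd a C0 = a.
Proof. by rewrite Cadd_comm Cadd0. Qed.

Lemma closed_step (W : {set V}) (IH : forall W' : {set V}, (#|W'| < #|W|)%N -> Claim W')
  (A : {set {set V}}) : A \subset M -> cover A = W ->
  forall e, e \in A -> Cnorm (Q (cover (A :\ e))) <= 2 * Cnorm (Q W).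
Proof.
move=> hA hW e eA.
have eM := subsetP hA e eA.
have eE := subsetP ME e eM.
have [v ve] := E_nonempty eE.
have eW : e \subset W by rewrite -hW; apply/subsetP => u ue; apply/coverP; exists e.
have vW : v \in W := subsetP eW v ve.
have cWA : coreE W = A by rewrite -hW coreE_cover.
have cardW : #|W| = (k * #|A|)%N by rewrite -hW coverM_card.
have cardWe : #|W :\: e| = (#|W| - k)%N by apply: card_Df.
have kA : (0 < #|A|)%N by apply/card_gt0P; exists e.
rewrite (Q_rec vW eM ve) eW (cover_D1 hA eA) hW.
set Y := Q (W :\: e).
set S := \big[Cadd/C0]_(f in TT W v) Q (W :\: f).
have hS : Cnorm S <= INR d * Cnorm Y.
  apply: Rle_trans (Cnorm_sum _ _) _.
  apply: sum_bound; last exact: Cnorm_ge0.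
  move=> f fT.
  move: (fT); rewrite inE => /andP [fEM /andP [vf fW]].
  have fE : f \in E by move: fEM; rewrite inE => /andP [].
  set J := JJ W f.
  have eJ : e \in J.
    rewrite inE cWA eA /=; apply/negP => /disjP h; exact: h v ve vf.
  have JA : J \subset A by rewrite -cWA; exact: JJ_sub.
  have jA : (#|J| <= #|A|)%N := subset_leq_card JA.
  have j1 : (0 < #|J|)%N by apply/card_gt0P; exists e.
  have cWf : coreE (W :\: f) = A :\: J by rewrite coreE_Df cWA.
  have ccard : #|A :\: J| = (#|A| - #|J|)%N by rewrite cardsDS.
  have cardWf : #|W :\: f| = (#|W| - k)%N by apply: card_Df.
  have kkA : (k <= k * #|A|)%N by rewrite leq_pmulr.
  have hlt : (#|W :\: f| < #|W|)%N by rewrite cardWf cardW; exact: nL1 k_gt0 kkA.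
  have hq : (k * ((#|J|).-1 + #|coreE (W :\: f)|) <= #|W :\: f|)%N.
    rewrite cWf ccard cardWf cardW.
    have -> : ((#|J|).-1 + (#|A| - #|J|) = #|A| - 1)%N by exact: nL2 j1 jA.
    by rewrite mulnBr muln1.
  have h1 := (IH _ hlt).2 _ hq.
  rewrite cWf in h1.
  have eq1 : A :\: J = (A :\ e) :\: (J :\ e).
    apply/setP => g; rewrite [LHS]in_setD [RHS]in_setD !in_setD1.
    by case: (eqVneq g e) => [-> | ne]; rewrite ?eJ ?eqxx ?ne.
  have hJ' : #|J :\ e| = (#|J|).-1 by move: (cardsD1 e J); rewrite eJ add1n => ->.
  have hB' : A :\ e \subset M := subset_trans (subsetDl _ _) hA.
  have hJB' : J :\ e \subset A :\ e.
    by apply/subsetP => g; rewrite !in_setD1 => /andP [-> /(subsetP JA) ->].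
  have hn' : (#|cover (A :\ e)| < #|W|)%N.
    rewrite (cover_D1 hA eA) hW cardWe cardW.
    have : (k <= k * #|A|)%N by rewrite leq_pmulr.
    exact: nL1 k_gt0.
  have h2 := multi IH hJ' hB' hJB' hn'.
  rewrite -eq1 (cover_D1 hA eA) hW in h2.
  rewrite -/Y in h2.
  apply: Rle_trans h1 _.
  have hp := pow_le (/2) (#|J|).-1 ltac:(lra).
  apply: Rle_trans (Rmult_le_compat_l _ _ _ hp h2) _.
  rewrite -Rmult_assoc half_pow Rmult_1_l; exact: Rle_refl.
have hxS : Cnorm (Cmul x S) <= Cnorm Y / 2.
  rewrite Cnorm_mul.
  have hY := Cnorm_ge0 Y.
  apply: Rle_trans (Rmult_le_compat_l _ _ _ (Cnorm_ge0 x) hS) _.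
  have := Rmult_le_compat_r _ _ _ hY Hx.
  lra.
have := Cnorm_sub Y (Cmul x S).
rewrite Cadd_comm; lra.
Qed.

Lemma partial_step (W : {set V}) (IH : forall W' : {set V}, (#|W'| < #|W|)%N -> Claim W') q :
  (k * (q + #|coreE W|) <= #|W|)%N ->
  Cnorm (Q W) <= (/2)^q * Cnorm (Q (cover (coreE W))).
Proof.
move=> hq.
set C := coreE W.
have hCW : cover C \subset W := core_sub W.
have cardC : #|cover C| = (k * #|C|)%N := coverM_card (coreE_sub W).
case: (boolP (W \subset cover C)) => [hWC | /subsetPn [v vW vC]].
  have eqW : cover C = W by apply/eqP; rewrite eqEsubset hCW hWC.
  have q0 : q = 0%N.
    move: hq; rewrite -{2}eqW cardC mulnDr => hq.
    exact: nL5 k_gt0 hq.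
  rewrite q0 eqW /=; lra.
have [e0 e0M ve0] := Mcov v.
have ne0W : ~~ (e0 \subset W).
  apply/negP => h; move/negP: vC; apply; apply/coverP; exists e0 => //.
  by rewrite inE e0M h.
rewrite (Q_rec vW e0M ve0) (negPf ne0W) Cadd0r Cnorm_mul.
set Z := Cnorm (Q (cover C)).
have hZ : 0 <= Z := Cnorm_ge0 _.
have hCl : (#|cover C| < #|W|)%N.
  apply: proper_card; rewrite properE hCW /=; apply/negP => h.
  by move/negP: vC; apply; exact: (subsetP h).
have hS : Cnorm (\big[Cadd/C0]_(f in TT W v) Q (W :\: f)) <= INR d * (2 * (/2)^q * Z).
  apply: Rle_trans (Cnorm_sum _ _) _.
  apply: sum_bound; last first.
    have := pow_le (/2) q ltac:(lra) => hp.
    apply: Rmult_le_pos => //; apply: Rmult_le_pos => //; lra.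
  move=> f fT.
  move: (fT); rewrite inE => /andP [fEM /andP [vf fW]].
  have fE : f \in E by move: fEM; rewrite inE => /andP [].
  set J := JJ W f.
  have JC : J \subset C := JJ_sub W f.
  have jC : (#|J| <= #|C|)%N := subset_leq_card JC.
  have cWf : coreE (W :\: f) = C :\: J by rewrite coreE_Df.
  have ccard : #|C :\: J| = (#|C| - #|J|)%N by rewrite cardsDS.
  have cardWf : #|W :\: f| = (#|W| - k)%N by apply: card_Df.
  have fk : #|f| = k := unifE fE.
  have kW : (k <= #|W|)%N by rewrite -fk; exact: subset_leq_card.
  have hlt : (#|W :\: f| < #|W|)%N by rewrite cardWf; exact: nL1 k_gt0 kW.
  have F0 : #|J| = 0%N -> (k * #|C| + k <= #|W|)%N.
    move=> j0; have J0 := cards0_eq j0.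
    have dis : [disjoint cover C & f].
      apply/disjP => u /coverP [e eC ue] uf.
      have : e \in J by rewrite inE eC /=; apply/negP => /disjP h; exact: h u ue uf.
      by rewrite J0 inE.
    rewrite -cardC -fk.
    have -> : (#|cover C| + #|f| = #|cover C :|: f|)%N.
      by rewrite cardsU (disjoint_setI0 dis) cards0 subn0.
    apply: subset_leq_card; apply/subsetP => u; rewrite inE => /orP [h | h].
      exact: (subsetP hCW). exact: (subsetP fW).
  have hq' : (k * ((q + #|J|).-1 + #|coreE (W :\: f)|) <= #|W :\: f|)%N.
    rewrite cWf ccard cardWf.
    case: (posnP (q + #|J|)) => hqj.
      move/eqP: hqj; rewrite addn_eq0 => /andP [/eqP hq0 /eqP hj].
      rewrite hj hq0 subn0 /=; exact: nL4 (F0 hj).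
    have -> : ((q + #|J|).-1 + (#|C| - #|J|) = (q + #|C|) - 1)%N by exact: nL3 hqj jC.
    rewrite mulnBr muln1; exact: leq_sub2r.
  have h1 := (IH _ hlt).2 _ hq'.
  rewrite cWf in h1.
  have h2 := multi IH (erefl #|J|) (coreE_sub W) JC hCl.
  apply: Rle_trans h1 _.
  have hp := pow_le (/2) ((q + #|J|).-1) ltac:(lra).
  rewrite -/Z in h2.
  apply: Rle_trans (Rmult_le_compat_l _ _ _ hp h2) _.
  rewrite -Rmult_assoc; apply: Rmult_le_compat_r => //; exact: pow_aux.
have hp := pow_le (/2) q ltac:(lra).
have hpZ : 0 <= (/2)^q * Z by apply: Rmult_le_pos.
apply: Rle_trans (Rmult_le_compat_l _ _ _ (Cnorm_ge0 x) hS) _.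
have := Rmult_le_compat_r _ _ _ hpZ Hx.
lra.
Qed.

Lemma step (W : {set V}) (IH : forall W' : {set V}, (#|W'| < #|W|)%N -> Claim W') : Claim W.
Proof.
split; last exact: partial_step.
move=> A hA hW; split; last exact: closed_step.
case: (set_0Vmem A) => [A0 | [e eA]].
  rewrite -hW A0 cover0 Q0; exact: C1_neq0.
have h := closed_step IH hA hW eA.
have eW : e \subset W by rewrite -hW; apply/subsetP => u ue; apply/coverP; exists e.
have eE := subsetP ME e (subsetP hA e eA).
have [u ue] := E_nonempty eE.
have hlt : (#|cover (A :\ e)| < #|W|)%N.
  rewrite (cover_D1 hA eA) hW cardsDS // (unifE eE).
  have : (k <= #|W|)%N by rewrite -(unifE eE); exact: subset_leq_card.
  exact: nL1 k_gt0.
have nz := ((IH _ hlt).1 (A :\ e) (subset_trans (subsetDl _ _) hA) erefl).1.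
have pos : 0 < Cnorm (Q (cover (A :\ e))).
  case: (Rle_lt_or_eq_dec 0 _ (Cnorm_ge0 (Q (cover (A :\ e))))) => // h0.
  by exfalso; apply: nz; apply: Cnorm_eq0.
move=> h0; rewrite h0 Cnorm0 in h; lra.
Qed.

Lemma claim_all n : forall W : {set V}, (#|W| <= n)%N -> Claim W.
Proof.
elim: n => [|n IHn] W hW; apply: step => W' hW'.
  by move: (leq_trans hW' hW).
apply: IHn; by rewrite -ltnS; exact: leq_trans hW' hW.
Qed.


Lemma Q_setT_neq0 : Q setT <> C0.
Proof.
have hcov : cover M = setT.
  apply/setP => u; rewrite inE; case: (Mcov u) => e eM ue; apply/coverP; by exists e.
have := (claim_all (leqnn #|(setT : {set V})|)).1 M (subxx M) hcov.
by case.
Qed.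

Lemma pmP (M' : {set {set V}}) : reflect
  [/\ M' \subset E, pdisj M' & forall v, exists2 e, e \in M' & v \in e]
  (perfect_matching E M').
Proof.
apply: (iffP and3P) => [[a b /forallP c] | [a b c]]; split => //.
  by move=> v; case/exists_inP: (c v) => e h1 h2; exists e.
by apply/forallP => v; case: (c v) => e h1 h2; apply/exists_inP; exists e.
Qed.

Lemma cover_eq (M' : {set {set V}}) : perfect_matching E M' ->
  cover (M :\: M') = cover (M' :\: M).
Proof.
case/pmP => hE hd hc.
apply/setP => u; apply/coverP/coverP => [[e] | [g]].
- rewrite inE => /andP [eM' eM] ue; case: (hc u) => g gM' ug.
  exists g => //; rewrite inE gM' andbT; apply/negP => gM.
  by move: eM'; rewrite (M_uniq eM gM ue ug) gM'.
- rewrite inE => /andP [gM gM'] ug; case: (Mcov u) => e eM ue.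
  exists e => //; rewrite inE eM andbT; apply/negP => eM'.
  by move: gM; rewrite (pdisj_uniq hd gM' eM' ug ue) eM.
Qed.

Lemma symdiff_card (M' : {set {set V}}) : perfect_matching E M' ->
  #|symdiff M M'| = (#|M' :\: M| + #|M' :\: M|)%N.
Proof.
move=> pm.
have eqc : #|M :\: M'| = #|M' :\: M|.
  have h1 := coverM_card (subsetDl M M').
  case/pmP: (pm) => hE hd _.
  have h2 : #|cover (M' :\: M)| = (k * #|M' :\: M|)%N.
    apply: cover_card; last exact: subset_trans (subsetDl _ _) hE.
    apply/pdisjP => f1 f2; rewrite !inE => /andP [_ a] /andP [_ b].
    exact: (pdisjP _ hd).
  apply/eqP; rewrite -(eqn_pmul2l k_gt0) -h1 -h2 cover_eq //.
rewrite /symdiff cardsU eqc.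
have -> : (M :\: M') :&: (M' :\: M) = set0.
  apply/setP => g; rewrite !inE.
  by case: (g \in M); case: (g \in M').
by rewrite cards0 subn0.
Qed.

Definition Rset (P : {set {set V}}) := [set e in M | [disjoint e & cover P]].

Lemma h_h' (M' : {set {set V}}) : perfect_matching E M' ->
  (M' :\: M) :|: Rset (M' :\: M) = M'.
Proof.
case/pmP => hE hd hc.
apply/setP => g; rewrite in_setU in_setD /Rset inE.
case gM : (g \in M) => /=; last by rewrite orbF.
apply/idP/idP => [hdis | gM'].
- have [u ug] := E_nonempty (subsetP ME g gM).
  case: (hc u) => h hM' uh.
  case hM : (h \in M).
    by rewrite (M_uniq gM hM ug uh).
  exfalso; move/disjP: hdis; apply; first exact: ug.
  by apply/coverP; exists h => //; rewrite inE hM hM'.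
- apply/disjP => u ug /coverP [h]; rewrite inE => /andP [hM hM'] uh.
  by move: hM; rewrite (pdisj_uniq hd hM' gM' uh ug) gM.
Qed.

Lemma pred_eq (P : {set {set V}}) :
  perfect_matching E (P :|: Rset P) && ((P :|: Rset P) :\: M == P) = adm setT P.
Proof.
apply/idP/idP.
- case/andP => /pmP [hE hd hc] /eqP heq.
  have PnM : forall f, f \in P -> f \notin M.
    move=> f fP; apply/negP => fM.
    by move: fP; rewrite -heq inE fM.
  have PhP : forall f, f \in P -> f \in P :|: Rset P by move=> f fP; rewrite inE fP.
  apply/admP; split.
  + apply/subsetP => f fP; rewrite inE PnM //=; exact: (subsetP hE _ (PhP f fP)).
  + by move=> f _; exact: subsetT.
  + apply/pdisjP => f1 f2 h1 h2; apply: (pdisjP _ hd); exact: PhP.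
  + move=> e eM /negP hne; apply/subsetP => u ue; rewrite !inE andbT.
    apply/negP => uc; apply: hne; apply/disjP => w we; rewrite !inE andbT => wc.
    case: (hc w) => g; rewrite in_setU => /orP [gP | gR] wg.
      by move/negP: wc; apply; apply/coverP; exists g.
    move: gR; rewrite /Rset inE => /andP [gM gdis].
    have ge := M_uniq gM eM wg we.
    rewrite ge in gdis; move/disjP: gdis => gdis; exact: gdis u ue uc.
- move=> /admP [h1 h2 h3 h4].
  have PnM : forall f, f \in P -> f \notin M.
    by move=> f fP; move: (subsetP h1 f fP); rewrite inE => /andP [].
  apply/andP; split.
  + apply/pmP; split.
    * apply/subsetP => g; rewrite in_setU => /orP [gP | gR].
        by move: (subsetP h1 g gP); rewrite inE => /andP [].
      move: gR; rewrite /Rset inE => /andP [gM _]; exact: (subsetP ME).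
    * apply/pdisjP => f1 f2; rewrite !in_setU.
      have key : forall f g, f \in P -> g \in Rset P -> [disjoint f & g].
        move=> f g fP; rewrite /Rset inE => /andP [_ gdis].
        apply/disjP => u uf ug; move/disjP: gdis; apply; first exact: ug.
        by apply/coverP; exists f.
      case/orP => [a1 | a1]; case/orP => [a2 | a2] ne.
      - exact: (pdisjP _ h3).
      - exact: key.
      - rewrite disjoint_sym; exact: key.
      - move: a1 a2; rewrite /Rset !inE => /andP [m1 _] /andP [m2 _]; exact: Mdisj.
    * move=> v; case: (boolP (v \in cover P)) => [/coverP [f fP vf] | vc].
        by exists f => //; rewrite in_setU fP.
      case: (Mcov v) => e eM ve; exists e => //.
      rewrite in_setU /Rset inE eM /=; apply/orP; right.
      have : e \subset setT :\: cover P.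
        apply: (h4 e eM); apply/negP => /disjP h; apply: (h v ve).
        by rewrite !inE vc.
      rewrite subsetD => /andP [_ //].
  + apply/eqP/setP => g; rewrite in_setD in_setU /Rset inE.
    case gM : (g \in M) => /=; first by case gP: (g \in P) => //; move: (PnM g gP); rewrite gM.
    by rewrite orbF.
Qed.

Lemma Zpm_Q (z : Cplx) : x = Cmul z z -> Zpm E M z = Q setT.
Proof.
move=> hx.
rewrite /Zpm foldrE big_map big_enum /= /Q.
rewrite (reindex_onto (fun P => P :|: Rset P) (fun M' => M' :\: M)) /=; last first.
  by move=> M'; rewrite inE => pm; exact: h_h'.
apply: eq_big => P; first by rewrite inE pred_eq.
rewrite inE => /andP [pm /eqP heq].
by rewrite symdiff_card // heq Cpow_double hx.
Qed.

End Comb.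

Theorem mainTheorem17 (V : finType) (k : nat) (E M : {set {set V}}) (z : Cplx) :
  (2 <= k)%N ->
  uniform k E ->
  perfect_matching E M ->
  Rle (Cnorm z) (Rinv (Rmult (Rplus (Rminus (INR (max_degree E)) R1) (INR k)) (exp R1))) ->
  Zpm E M z <> C0.
Proof.
move=> hk hunif hpm hz.
have k_gt0 : (0 < k)%N by apply: leq_trans hk.
have unifE : forall e, e \in E -> #|e| = k.
  by move=> e he; move/forall_inP: hunif => h; apply/eqP; exact: h.
case/and3P: (hpm) => ME hdisj /forallP hcov.
move/pdisjP: hdisj => Mdisj.
have Mcov : forall v, exists2 e, e \in M & v \in e.
  by move=> v; case/exists_inP: (hcov v) => e h1 h2; exists e.
set D := max_degree E.
have Hdeg : forall v, (#|[set f in E :\: M | v \in f]| <= D.-1)%N.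
  move=> v; case: (Mcov v) => e0 e0M ve0.
  have sub : [set f in E :\: M | v \in f] \subset [set f in E | v \in f] :\ e0.
    apply/subsetP => f; rewrite !inE => /andP [/andP [fM fE] vf].
    rewrite fE vf !andbT; apply/negP => /eqP fe; by rewrite fe e0M in fM.
  have c1 : #|[set f in E | v \in f] :\ e0| = (degree E v).-1.
    rewrite /degree (cardsD1 e0 [set f in E | v \in f]) inE (subsetP ME e0 e0M) ve0 /=.
    by [].
  have c2 : (degree E v <= D)%N by rewrite /D /max_degree; apply: (@leq_bigmax _ (fun w => degree E w) v).
  apply: leq_trans (subset_leq_card sub) _; rewrite c1 -!subn1; exact: leq_sub2r.
have Hx : 2 * Cnorm (Cmul z z) * INR D.-1 <= 1.
  rewrite Cnorm_mul.
  move: hz (Cnorm_ge0 z); move: (Cnorm z) => c hz c0.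
  case HD : D => [|D'].
    by rewrite /= Rmult_0_r; lra.
  rewrite -/D HD S_INR in hz; rewrite /=.
  have hk2 : 2 <= INR k.
    have := le_INR 2 k (elimT (@leP 2 k) hk); rewrite /=; lra.
  have he : 2 <= exp 1 by have := exp_ineq1 1 ltac:(lra); lra.
  have hD := pos_INR D'.
  have eqL : (INR D' + 1 - R1 + INR k) * exp R1 = (INR D' + INR k) * exp 1.
    by change R1 with 1; ring.
  rewrite eqL in hz.
  set L := ((INR D' + INR k) * exp 1).
  have hL : 2 * (INR D' + 2) <= L.
    rewrite /L; have : (INR D' + 2) * 2 <= (INR D' + INR k) * exp 1.
      apply: Rmult_le_compat; lra.
    lra.
  have Lpos : 0 < L by lra.
  have cL : c * L <= 1.
    have := Rmult_le_compat_r L _ _ (Rlt_le _ _ Lpos) hz.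
    rewrite Rinv_l; last exact: (Rgt_not_eq _ _ Lpos).
    lra.
  have h1 : c * (2 * (INR D' + 2)) <= 1.
    apply: Rle_trans cL; exact: Rmult_le_compat_l.
  have hcD0 : 0 <= c * INR D' by apply: Rmult_le_pos.
  have hc : c <= 1/4 by lra.
  have hcD : c * INR D' <= 1/2 by lra.
  have := Rmult_le_compat _ _ _ _ c0 hcD0 hc hcD.
  lra.
rewrite (Zpm_Q k_gt0 unifE ME Mdisj Mcov (erefl (Cmul z z))).
exact: (Q_setT_neq0 k_gt0 unifE ME Mdisj Mcov Hdeg Hx).
Qed.
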